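(* Let $r\ge 3$ and $n\ge 2r$, and let $M$ be a matroid of rank $r$ on a linearly ordered set $E$ with $|E|=n$. Then \[ \sum_{k=0}^{r-1}|\mathcal V_k|\,c_k\le 1,\qquad\text{where } c_{r-1}=\frac{r}{\binom{n}{r-1}},\quad c_0=\frac1n,\quad c_k=\frac{k}{\binom nk}\ (0<k<r-1). \]
   Context: Graded lexicographic order on $2^E$: $X\prec Y$ if $|X|<|Y|$, or $|X|=|Y|$ and $\min(X\triangle Y)\in X$; $\min\mathcal X$ is the $\prec$-smallest member. $X$ is $k$-closed in $M$ if $\mathrm{cl}_M(Y)\subseteq X$ for all $Y\subseteq X$ with $|Y|\le k$; $\mathrm{cl}_k(X)$ is the intersection of all $k$-closed supersets of $X$ (so $\mathrm{cl}_{-1}(X)=X$). For a flat $F$ of rank $k$, $U^*_F=\min\{U:\mathrm{cl}_{k-1}(U)=F\}$; $\mathcal U^*_k=\{U^*_F: F\text{ a flat of rank }k,\ |U^*_F|>k\}$. $V\subseteq U$ is consecutive in $U$ if there are no $e,g\in V$, $f\in U\setminus V$ with $e<f<g$. For $U\in\mathcal U^*_k$, $\mathcal V(U)$ is the set of consecutive $(k+1)$-subsets of $U$, and $\mathcal V_k=\bigcup_{U\in\mathcal U^*_k}\mathcal V(U)$. *)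

(* Defs.v *)
From mathcomp Require Import all_boot all_order all_algebra ssrint rat.
Set Implicit Arguments. Unset Strict Implicit. Unset Printing Implicit Defensive.
Import Order.TTheory GRing.Theory Num.Theory.

(* Ground set E = 'I_n, linearly ordered by the natural order on indices. *)

Record matroid (n : nat) := Matroid {
  indep : {set 'I_n} -> bool;
  indep0 : indep set0;
  indep_sub : forall X Y : {set 'I_n}, Y \subset X -> indep X -> indep Y;
  indep_aug : forall X Y : {set 'I_n}, indep X -> indep Y -> #|X| < #|Y| ->
     exists2 e, e \in Y :\: X & indep (e |: X)
}.

Section MatroidDefs.
Variables (n : nat) (M : matroid n).

Definition mrank (X : {set 'I_n}) : nat :=
  \max_(Y : {set 'I_n} | (Y \subset X) && indep M Y) #|Y|.

Definition mcl (X : {set 'I_n}) : {set 'I_n} :=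
  [set e | mrank (e |: X) == mrank X].

Definition flat (F : {set 'I_n}) : bool := mcl F == F.

(* X is k-closed (k an integer, possibly -1) *)
Definition kclosed (k : int) (X : {set 'I_n}) : bool :=
  [forall Y : {set 'I_n}, ((Y \subset X) && (#|Y|%:Z <= k)%R) ==> (mcl Y \subset X)].

Definition clk (k : int) (X : {set 'I_n}) : {set 'I_n} :=
  \bigcap_(Z : {set 'I_n} | kclosed k Z && (X \subset Z)) Z.

Definition glex_lt (X Y : {set 'I_n}) : bool :=
  (#|X| < #|Y|) ||
  ((#|X| == #|Y|) &&
   [exists e : 'I_n, (e \in X) && (e \notin Y) &&
      [forall f : 'I_n, (f < e)%N ==> ((f \in X) == (f \in Y))]]).

Definition is_Ustar (F U : {set 'I_n}) : bool :=
  let k := ((mrank F)%:Z)%R in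
  (clk (k - 1)%R U == F) &&
  [forall U' : {set 'I_n}, ((clk (k - 1)%R U' == F) && (U' != U)) ==> glex_lt U U'].

Definition Ustar_k (k : nat) : {set {set 'I_n}} :=
  [set U : {set 'I_n} | [exists F : {set 'I_n}, [&& flat F, mrank F == k & is_Ustar F U]]
                        && (k < #|U|)].

Definition consecutive (V U : {set 'I_n}) : bool :=
  (V \subset U) &&
  ~~ [exists e : 'I_n, exists f : 'I_n, exists g : 'I_n,
        [&& e \in V, g \in V, f \in U :\: V, (e < f)%N & (f < g)%N]].

Definition VofU (k : nat) (U : {set 'I_n}) : {set {set 'I_n}} :=
  [set V : {set 'I_n} | consecutive V U && (#|V| == k.+1)].

Definition V_k (k : nat) : {set {set 'I_n}} :=
  \bigcup_(U in Ustar_k k) VofU k U.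

End MatroidDefs.

Definition ck (n r k : nat) : rat :=
  if k == r.-1 then (r%:R / ('C(n, r.-1))%:R)%R
  else if k == 0 then (1 / n%:R)%R
  else (k%:R / ('C(n, k))%:R)%R.

(* Main.v *)
Require Import Defs.
From mathcomp Require Import all_boot all_order all_algebra ssrint rat.
From mathcomp Require Import zify.
Import Order.TTheory GRing.Theory Num.Theory.
Set Implicit Arguments. Unset Strict Implicit. Unset Printing Implicit Defensive.

Lemma mrank_ge n (M : matroid n) (X I : {set 'I_n}) :
  I \subset X -> indep M I -> #|I| <= mrank M X.
Proof.
move=> sIX iI.
have H := (@bigop.bigmax_sup _ I (fun Y : {set 'I_n} => (Y \subset X) && indep M Y) _ (fun Y : {set 'I_n} => #|Y|) (introT andP (conj sIX iI)) (leqnn _)).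
exact H.
Qed.

Lemma mrank_wit n (M : matroid n) (X : {set 'I_n}) :
  exists I : {set 'I_n}, [/\ I \subset X, indep M I & #|I| = mrank M X].
Proof.
have P0 : (set0 \subset X) && indep M set0 by rewrite sub0set indep0.
have H := (@bigop.bigmax_eq_arg _ set0 (fun Y : {set 'I_n} => (Y \subset X) && indep M Y) (fun Y : {set 'I_n} => #|Y|) P0).
rewrite /mrank H.
case: arg_maxnP => //= I /andP[sIX iI] _.
by exists I.
Qed.

Lemma mrank_le n (M : matroid n) (X : {set 'I_n}) m :
  (forall I : {set 'I_n}, I \subset X -> indep M I -> #|I| <= m) -> mrank M X <= m.
Proof.
move=> H; rewrite /mrank; apply/bigop.bigmax_leqP => I /andP[]; exact: H.
Qed.

Lemma mrank_card n (M : matroid n) (X : {set 'I_n}) : mrank M X <= #|X|.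
Proof. by apply: mrank_le => I sIX _; apply: subset_leq_card. Qed.

Lemma mrank_indep n (M : matroid n) (X : {set 'I_n}) : indep M X -> mrank M X = #|X|.
Proof. by move=> iX; apply/eqP; rewrite eqn_leq mrank_card mrank_ge. Qed.

Lemma mrank_mono n (M : matroid n) (X Y : {set 'I_n}) : X \subset Y -> mrank M X <= mrank M Y.
Proof.
move=> sXY; apply: mrank_le => I sIX iI; apply: mrank_ge => //.
exact: subset_trans sXY.
Qed.

Lemma mrank_dep n (M : matroid n) (X : {set 'I_n}) : ~~ indep M X -> mrank M X < #|X|.
Proof.
move=> dX; have [I [sIX iI <-]] := mrank_wit M X.
rewrite ltn_neqAle subset_leq_card // andbT.
apply: contraNneq dX => eIX.
suff -> : X = I by [].
by apply/eqP; rewrite eq_sym eqEcard sIX eIX leqnn.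
Qed.

Lemma indep_extend n (M : matroid n) (Y : {set 'I_n}) : forall I : {set 'I_n}, I \subset Y -> indep M I ->
  exists J : {set 'I_n}, [/\ I \subset J, J \subset Y, indep M J & #|J| = mrank M Y].
Proof.
move=> I0.
have [m Hm] : exists m, mrank M Y - #|I0| <= m by exists (mrank M Y - #|I0|).
elim: m I0 Hm => [|m IH] I Hm sIY iI.
  by exists I; split => //; apply/eqP; rewrite eqn_leq mrank_ge //= -subn_eq0 -leqn0.
have [eqI|lt] := eqVneq #|I| (mrank M Y).
  by exists I; split.
have ltI : #|I| < mrank M Y by rewrite ltn_neqAle lt mrank_ge.
have [K [sKY iK eK]] := mrank_wit M Y.
have : #|I| < #|K| by rewrite eK.
move/(indep_aug iI iK) => [e /setDP[eK' eI] ieI].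
have H1 : mrank M Y - #|e |: I| <= m by rewrite cardsU1 eI; lia.
have H2 : e |: I \subset Y by rewrite subUset sub1set (subsetP sKY) ?sIY.
have [J [sJ1 sJ2 iJ eJ]] := IH (e |: I) H1 H2 ieI.
by exists J; split => //; apply: subset_trans sJ1; apply: subsetUr.
Qed.

Lemma mcl_mono n (M : matroid n) (X Y : {set 'I_n}) e :
  X \subset Y -> mrank M (e |: X) = mrank M X -> mrank M (e |: Y) = mrank M Y.
Proof.
move=> sXY eX.
have [I [sIX iI eI]] := mrank_wit M X.
have [J [sIJ sJY iJ eJ]] := indep_extend (subset_trans sIX sXY) iI.
apply/eqP; rewrite eqn_leq; apply/andP; split; last by apply: mrank_mono; apply: subsetUr.
rewrite leqNgt; apply/negP => lt.
have [K [sKY iK eK]] := mrank_wit M (e |: Y).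
have : #|J| < #|K| by rewrite eK eJ.
move/(indep_aug iJ iK) => [f /setDP[fK fJ] ifJ].
have /setU1P[fe|fY] := subsetP sKY f fK; last first.
  have sfY : f |: J \subset Y by rewrite subUset sub1set fY sJY.
  by have := mrank_ge sfY ifJ; rewrite cardsU1 fJ eJ add1n ltnn.
subst f.
have eI' : e \notin I by apply: contra fJ; apply: (subsetP sIJ).
have ieI : indep M (e |: I).
  by apply: indep_sub ifJ; rewrite setUS.
have seX : e |: I \subset e |: X by rewrite setUS.
by have := mrank_ge seX ieI; rewrite cardsU1 eI' eI eX add1n ltnn.
Qed.

Lemma intle (a b : nat) : a.+1 <= b -> (a%:Z <= b%:Z - 1)%R.
Proof. by move=> h; rewrite lerBrDr -PoszD lez_nat addn1. Qed.

Lemma clk_sup n (M : matroid n) k (X : {set 'I_n}) : X \subset clk M k X.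
Proof. by apply/bigcapsP => Z /andP[]. Qed.

Lemma clk_min n (M : matroid n) k (X Z : {set 'I_n}) :
  kclosed M k Z -> X \subset Z -> clk M k X \subset Z.
Proof. by move=> kZ sXZ; apply: bigcap_inf; rewrite kZ sXZ. Qed.

Lemma clk_closed n (M : matroid n) k (X : {set 'I_n}) : kclosed M k (clk M k X).
Proof.
apply/forallP => Y; apply/implyP => /andP[sY hY].
apply/bigcapsP => Z /andP[kZ sXZ].
move/forallP: (kZ) => /(_ Y) /implyP; apply.
by rewrite hY andbT (subset_trans sY) // clk_min.
Qed.

Lemma clk_cl n (M : matroid n) k (X Y : {set 'I_n}) :
  Y \subset clk M k X -> (#|Y|%:Z <= k)%R -> mcl M Y \subset clk M k X.
Proof.
move=> sY hY; have := clk_closed M k X.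
by move/forallP => /(_ Y) /implyP; apply; rewrite sY hY.
Qed.

Lemma clk_mono n (M : matroid n) k (X X' : {set 'I_n}) :
  X \subset X' -> clk M k X \subset clk M k X'.
Proof.
by move=> sXX'; apply: clk_min (clk_closed _ _ _) _; apply: subset_trans sXX' (clk_sup _ _ _).
Qed.

Lemma clk_idem n (M : matroid n) k (X : {set 'I_n}) : clk M k (clk M k X) = clk M k X.
Proof.
by apply/eqP; rewrite eqEsubset clk_sup andbT; apply: clk_min (clk_closed _ _ _) _.
Qed.

Lemma mclP n (M : matroid n) (Y : {set 'I_n}) e :
  (e \in mcl M Y) = (mrank M (e |: Y) == mrank M Y).
Proof. by rewrite inE. Qed.

Lemma glex_card n (X Y : {set 'I_n}) : glex_lt X Y -> #|X| <= #|Y|.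
Proof. by case/orP => [/ltnW //| /andP[/eqP -> _]]. Qed.

Lemma glex_asym n (X Y : {set 'I_n}) : glex_lt X Y -> glex_lt Y X -> False.
Proof.
move=> h1 h2; have c1 := glex_card h1; have c2 := glex_card h2.
move: h1 h2; rewrite /glex_lt.
have -> : (#|X| < #|Y|) = false by apply/negbTE; rewrite -leqNgt.
have -> : (#|Y| < #|X|) = false by apply/negbTE; rewrite -leqNgt.
rewrite /= => /andP[_ /existsP[e /andP[/andP[eX eY] He]]] /andP[_ /existsP[e' /andP[/andP[eY' eX'] He']]].
have [lt|lt|eq] := ltngtP e e'.
- by move/forallP: He' => /(_ e) /implyP /(_ lt); rewrite eX (negbTE eY).
- by move/forallP: He => /(_ e') /implyP /(_ lt); rewrite eY' (negbTE eX').
- by move/val_inj: eq => eq; subst e'; rewrite eX in eX'.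
Qed.

Lemma ustar_min n (M : matroid n) (F U U' : {set 'I_n}) :
  is_Ustar M F U -> clk M ((mrank M F)%:Z - 1)%R U' = F -> U' != U -> glex_lt U U'.
Proof.
case/andP => _ /forallP /(_ U') /implyP H e ne; apply: H; by rewrite e eqxx ne.
Qed.

Lemma ustar_clk n (M : matroid n) (F U : {set 'I_n}) :
  is_Ustar M F U -> clk M ((mrank M F)%:Z - 1)%R U = F.
Proof. by case/andP => /eqP. Qed.

Lemma ustar_sub n (M : matroid n) (F U : {set 'I_n}) : is_Ustar M F U -> U \subset F.
Proof. by move=> h; rewrite -(ustar_clk h) clk_sup. Qed.

Lemma ustar_indep n (M : matroid n) (F U Y : {set 'I_n}) :
  is_Ustar M F U -> 0 < mrank M F -> Y \subset U -> #|Y| <= mrank M F -> indep M Y.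
Proof.
move=> hU k0 sYU cY; apply/negPn/negP => dY.
pose P := fun C : {set 'I_n} => (C \subset Y) && ~~ indep M C.
have PY : P Y by rewrite /P subxx dY.
case: (@arg_minnP _ Y P (fun C : {set 'I_n} => #|C|) PY) => C /andP[sCY dC] minC.
have [u uC] : exists u, u \in C.
  apply/set0Pn; apply: contraNneq dC => ->; exact: indep0.
have iCu : indep M (C :\ u).
  apply/negPn/negP => d.
  have := minC (C :\ u); rewrite /P (subset_trans (subD1set C u)) // d /= => /(_ isT).
  by rewrite (cardsD1 u C) uC add1n ltnn.
have cC : #|C| = #|C :\ u|.+1 by rewrite (cardsD1 u C) uC.
have umcl : u \in mcl M (C :\ u).
  rewrite mclP setD1K // (mrank_indep iCu); apply/eqP/anti_leq/andP; split.
    by have := mrank_dep dC; rewrite cC ltnS.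
  by rewrite -(mrank_indep iCu); apply: mrank_mono; apply: subD1set.
set k := ((mrank M F)%:Z - 1)%R.
have sCU : C \subset U by apply: subset_trans sCY sYU.
have uU : u \in U by apply: (subsetP sCU).
have e1 : clk M k (U :\ u) \subset F by rewrite -(ustar_clk hU) clk_mono // subD1set.
have e2 : U \subset clk M k (U :\ u).
  apply/subsetP => y yU; have [->|yu] := eqVneq y u.
    apply: (subsetP (clk_cl _ _)) umcl.
      by apply: subset_trans (clk_sup _ _ _); apply: setSD.
    rewrite /k; apply: intle; rewrite -cC; exact: leq_trans (subset_leq_card sCY) cY.
  by apply: (subsetP (clk_sup _ _ _)); rewrite !inE yu.
have e3 : clk M k (U :\ u) = F.
  apply/eqP; rewrite eqEsubset e1 /= -(ustar_clk hU) -/k.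
  by rewrite -(clk_idem M k (U :\ u)) clk_mono.
have ne : U :\ u != U by apply/eqP => h; move: uU; rewrite -h !inE eqxx.
have := glex_card (ustar_min hU e3 ne).
by rewrite (cardsD1 u U) uU add1n ltnn.
Qed.

Lemma ustar_mcl n (M : matroid n) (F U X : {set 'I_n}) w :
  is_Ustar M F U -> 0 < mrank M F -> X \subset U -> #|X| = mrank M F -> w \in U ->
  w \in mcl M X.
Proof.
move=> hU k0 sXU cX wU.
have iX : indep M X by apply: ustar_indep hU k0 sXU _; rewrite cX.
rewrite mclP (mrank_indep iX); apply/eqP/anti_leq/andP; split.
  rewrite cX; apply: mrank_mono; apply: subset_trans (ustar_sub hU).
  by rewrite subUset sub1set wU sXU.
by rewrite -(mrank_indep iX); apply: mrank_mono; apply: subsetUr.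
Qed.

Lemma cross n (M : matroid n) (F F' U U' X : {set 'I_n}) x w :
  is_Ustar M F U -> 0 < mrank M F -> is_Ustar M F' U' -> mrank M F < mrank M F' ->
  X \subset U -> #|X| = mrank M F -> X \subset U' -> x \in X -> w \in U -> w \notin X ->
  (w < x)%N -> False.
Proof.
move=> hU k0 hU' lt sXU cX sXU' xX wU wX wx.
set k' := ((mrank M F')%:Z - 1)%R.
have cF' := ustar_clk hU'; rewrite -/k' in cF'.
have xw : x != w by apply: contraNneq wX => <-.
pose X' := w |: (X :\ x).
have sX'U : X' \subset U by rewrite subUset sub1set wU (subset_trans (subD1set X x)).
have cX' : #|X'| = mrank M F.
  rewrite cardsU1 !inE negb_and wX orbT /= -cX (cardsD1 x X) xX.
  by rewrite add1n.
have xmX' : x \in mcl M X' := ustar_mcl hU k0 sX'U cX' (subsetP sXU x xX).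
have wmX : w \in mcl M X := ustar_mcl hU k0 sXU cX wU.
have wF' : w \in F'.
  rewrite -cF'; apply: (subsetP (clk_cl _ _)) wmX.
    by apply: subset_trans sXU' (clk_sup _ _ _).
  by rewrite /k' cX; apply: intle.
pose U'' := w |: (U' :\ x).
have sU'F' : U' \subset F' by apply: ustar_sub hU'.
have sU''F' : U'' \subset F'.
  by rewrite subUset sub1set wF' (subset_trans (subD1set U' x)).
have sX'U'' : X' \subset U''.
  by rewrite /X' /U'' setUS // setSD.
have xU'' : x \in clk M k' U''.
  apply: (subsetP (clk_cl _ _)) xmX'.
    by apply: subset_trans sX'U'' (clk_sup _ _ _).
  by rewrite /k' cX'; apply: intle.
have sU' : U' \subset clk M k' U''.
  apply/subsetP => y yU; have [->|yx] := eqVneq y x; first exact: xU''.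
  by apply: (subsetP (clk_sup _ _ _)); rewrite !inE yx yU orbT.
have e3 : clk M k' U'' = F'.
  apply/eqP; rewrite eqEsubset; apply/andP; split.
    have hF' : clk M k' F' = F' by rewrite -[in LHS]cF' clk_idem.
    by apply: subset_trans (clk_mono _ _ sU''F') _; rewrite hF'.
  by rewrite -cF' -(clk_idem M k' U'') clk_mono.
have xU' : x \in U' by apply: (subsetP sXU').
have ne : U'' != U' by apply/eqP => h; move: xU'; rewrite -h !inE eqxx (negbTE xw).
have g := ustar_min hU' e3 ne.
have cU'' : #|U''| <= #|U'|.
  by rewrite cardsU1 (cardsD1 x U') xU'; case: (w \notin _).
move: g; rewrite /glex_lt ltnNge cU'' /= => /andP[/eqP ceq /existsP[e /andP[/andP[eU' eU''] He]]].
have ex : e = x.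
  apply/eqP; apply: contraNT eU'' => ex; by rewrite !inE ex eU' orbT.
subst e.
move/forallP: He => /(_ w) /implyP /(_ wx).
rewrite !inE eqxx /= => /eqP wU'.
have wU'x : w \in U' :\ x by rewrite !inE eq_sym xw wU'.
move: ceq; rewrite /U'' cardsU1 wU'x /= (cardsD1 x U') xU' add1n add0n => /esym/n_Sn [].
Qed.

Lemma flat_sub n (M : matroid n) (F F' U X : {set 'I_n}) :
  flat M F' -> is_Ustar M F U -> 0 < mrank M F -> X \subset U -> #|X| = mrank M F ->
  X \subset F' -> F \subset F'.
Proof.
move=> fF' hU k0 sXU cX sXF'.
have iX : indep M X by apply: ustar_indep hU k0 sXU _; rewrite cX.
apply/subsetP => e eF.
have h : mrank M (e |: X) = mrank M X.
  apply/anti_leq/andP; split; last by apply: mrank_mono; apply: subsetUr.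
  rewrite (mrank_indep iX) cX; apply: mrank_mono.
  by rewrite subUset sub1set eF (subset_trans sXU (ustar_sub hU)).
have := mcl_mono sXF' h => h'.
by rewrite -(eqP fF') mclP h'.
Qed.

Lemma same_level n (M : matroid n) (F F' U U' X : {set 'I_n}) :
  flat M F -> flat M F' -> is_Ustar M F U -> is_Ustar M F' U' ->
  mrank M F = mrank M F' -> 0 < mrank M F ->
  X \subset U -> X \subset U' -> #|X| = mrank M F -> U = U'.
Proof.
move=> fF fF' hU hU' eF k0 sXU sXU' cX.
have s1 : F \subset F'.
  apply: flat_sub fF' hU k0 sXU cX _.
  exact: subset_trans sXU' (ustar_sub hU').
have s2 : F' \subset F.
  apply: flat_sub fF hU' _ sXU' _ _; rewrite -?eF //.
  exact: subset_trans sXU (ustar_sub hU).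
have eFF : F = F' by apply/eqP; rewrite eqEsubset s1 s2.
subst F'.
have [//|ne] := eqVneq U' U.
have g1 := ustar_min hU (ustar_clk hU') ne.
have ne' : U != U' by rewrite eq_sym.
have g2 := ustar_min hU' (ustar_clk hU) ne'.
by case: (glex_asym g1 g2).
Qed.

Lemma ustar0_loop n (M : matroid n) (F U : {set 'I_n}) x :
  is_Ustar M F U -> mrank M F = 0 -> x \in U -> ~~ indep M [set x].
Proof.
move=> hU e0 xU; apply/negP => ix.
have s : [set x] \subset F by rewrite sub1set (subsetP (ustar_sub hU)).
by have := mrank_ge s ix; rewrite e0 cards1.
Qed.

Lemma ustar_single n (M : matroid n) (F U : {set 'I_n}) x :
  is_Ustar M F U -> 0 < mrank M F -> x \in U -> indep M [set x].
Proof.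
move=> hU k0 xU; apply: (ustar_indep hU k0); first by rewrite sub1set.
by rewrite cards1.
Qed.

Lemma atmost1 (T : finType) (A : {set T}) :
  (forall x y, x \in A -> y \in A -> x = y) -> #|A| <= 1.
Proof.
move=> H; case: (set_0Vmem A) => [->|[x xA]]; first by rewrite cards0.
rewrite -(cards1 x); apply: subset_leq_card; apply/subsetP => y yA.
by rewrite inE; apply/eqP; apply: H.
Qed.

Lemma diff_elem (T : finType) (X Y : {set T}) :
  #|X| = #|Y| -> X != Y -> exists2 e, e \in X & e \notin Y.
Proof.
move=> c ne; apply/subsetPn; apply: contra ne => s.
by rewrite eqEcard s c leqnn.
Qed.

Lemma consec_top n (U V : {set 'I_n}) u e g :
  consecutive V U -> u \in V -> (forall y, y \in U -> (y <= u)%N) ->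
  e \in U -> e \notin V -> g \in V -> (e < g)%N.
Proof.
case/andP => sVU nc uV umax eU eV gV.
have eu : (e < u)%N.
  rewrite ltn_neqAle umax // andbT; apply: contraNneq eV => eu.
  by rewrite (val_inj eu).
rewrite ltnNge leq_eqVlt negb_or; apply/andP; split.
  by apply: contraNneq eV => ge; rewrite -(val_inj ge).
apply/negP => ge; move: nc; apply/negP/negPn.
apply/existsP; exists g; apply/existsP; exists e; apply/existsP; exists u.
by rewrite gV uV !inE eV eU ge eu.
Qed.

Lemma VofU_empty n k (U : {set 'I_n}) : #|U| <= k -> VofU k U = set0.
Proof.
move=> c; apply/setP => V; rewrite !inE; apply/negP => /andP[/andP[sVU _] /eqP cV].
by have := subset_leq_card sVU; rewrite cV; move/leq_trans/(_ c); rewrite ltnn.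
Qed.

Lemma VofU_card n k (U : {set 'I_n}) : #|VofU k U| <= #|U| - k.
Proof.
move: {2}#|U| (erefl #|U|) => m; elim: m U => [|m IH] U cU.
  by rewrite VofU_empty ?cards0 // cU.
have [le|lt] := leqP m.+1 k; first by rewrite VofU_empty ?cards0 // cU.
have [u0 u0U] : exists u0, u0 \in U by apply/card_gt0P; rewrite cU.
case: (@arg_maxnP _ u0 (fun i => i \in U) (fun i : 'I_n => nat_of_ord i) u0U) => u uU umax.
set T := [set V in VofU k U | u \in V].
have sub : VofU k U \subset VofU k (U :\ u) :|: T.
  apply/subsetP => V VV; rewrite in_setU.
  case uV: (u \in V); first by apply/orP; right; rewrite /T in_set VV uV.
  apply/orP; left; move: VV; rewrite !inE => /andP[/andP[sVU nc] ->]; rewrite andbT.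
  apply/andP; split.
    apply/subsetP => y yV; rewrite !inE (subsetP sVU) // andbT.
    by apply: contraFneq uV => <-.
  apply: contra nc => /existsP[e /existsP[f /existsP[g /and5P[eV gV fU ef fg]]]].
  apply/existsP; exists e; apply/existsP; exists f; apply/existsP; exists g.
  move: fU; rewrite !inE => /andP[fV /andP[_ fU]].
  by rewrite eV gV fV fU ef fg.
have cT : #|T| <= 1.
  apply: atmost1 => V V'; rewrite !inE => /andP[/andP[/andP[cV sV] /eqP kV] uV] /andP[/andP[/andP[cV' sV'] /eqP kV'] uV'].
  apply/eqP; apply/negPn/negP => ne.
  have [e eV eV'] := diff_elem (etrans kV (esym kV')) ne.
  have ne' : V' != V by rewrite eq_sym.
  have [g gV' gV] := diff_elem (etrans kV' (esym kV)) ne'.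
  have eU : e \in U by apply: (subsetP cV).
  have gU : g \in U by apply: (subsetP cV').
  have c1 : consecutive V U by rewrite /consecutive cV sV.
  have c2 : consecutive V' U by rewrite /consecutive cV' sV'.
  have h1 := consec_top c2 uV' umax eU eV' gV'.
  have h2 := consec_top c1 uV umax gU gV eV.
  by move: (ltn_trans h1 h2); rewrite ltnn.
have cU' : #|U :\ u| = m by move: cU; rewrite (cardsD1 u U) uU add1n => [[]].
have := IH _ cU'; rewrite cU' => h.
have := leq_trans (subset_leq_card sub) (leq_card_setU _ _).1.
move=> h'; apply: (leq_trans h'); lia.
Qed.


Definition Sset n (k : nat) (U : {set 'I_n}) : {set {set 'I_n}} :=
  [set X : {set 'I_n} | [&& X \subset U, #|X| == k &
     [exists x in X, exists w in U :\: X, (w < x)%N]]].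

Lemma Sset_card n k (U : {set 'I_n}) : 'C(#|U|, k) <= #|Sset k U| + 1.
Proof.
pose D := [set X : {set 'I_n} | X \subset U & #|X| == k].
pose cond := fun X : {set 'I_n} => [exists x in X, exists w in U :\: X, (w < x)%N].
pose B := [set X in D | ~~ cond X].
have cD : #|D| = 'C(#|U|, k) by rewrite cards_draws.
have sub : D \subset Sset k U :|: B.
  apply/subsetP => X XD; rewrite in_setU; case cX: (cond X).
    by move: XD; rewrite !inE => /andP[-> ->]; move: cX; rewrite /cond => ->.
  by apply/orP; right; rewrite /B in_set XD cX.
have cB : #|B| <= 1.
  apply: atmost1 => X X'; rewrite !inE => /andP[/andP[sX /eqP kX] cX] /andP[/andP[sX' /eqP kX'] cX'].
  apply/eqP; apply/negPn/negP => ne.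
  have [e eX eX'] := diff_elem (etrans kX (esym kX')) ne.
  have ne' : X' != X by rewrite eq_sym.
  have [g gX' gX] := diff_elem (etrans kX' (esym kX)) ne'.
  have eU : e \in U by apply: (subsetP sX).
  have gU : g \in U by apply: (subsetP sX').
  have [lt|lt|eq] := ltngtP e g.
  - move: cX'; apply/negP/negPn; apply/existsP; exists g; rewrite gX' /=.
    by apply/existsP; exists e; rewrite !inE eX' eU lt.
  - move: cX; apply/negP/negPn; apply/existsP; exists e; rewrite eX /=.
    by apply/existsP; exists g; rewrite !inE gX gU lt.
  - by move/val_inj: eq => eq; subst g; rewrite eX in gX.
rewrite -cD; apply: leq_trans (subset_leq_card sub) _.
apply: leq_trans (leq_card_setU _ _).1 _; by rewrite leq_add2l.
Qed.

Lemma Sset_sub n k (U X : {set 'I_n}) : X \in Sset k U -> X \subset U /\ #|X| = k.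
Proof. by rewrite inE => /and3P[? /eqP ? _]. Qed.

Lemma bin_ge_m m j : 0 < j -> j < m -> m <= 'C(m, j).
Proof.
elim: m j => [|m IH] [|j] // _ lt.
have [e|lt'] := eqVneq j.+1 m.
  by rewrite -e binSn.
have lt2 : j.+1 < m by rewrite ltn_neqAle lt' -ltnS lt.
rewrite binS; have := IH j.+1 isT lt2.
have : 0 < 'C(m, j) by rewrite bin_gt0; apply: ltnW; apply: ltnW.
lia.
Qed.

Lemma binA1 m k : 0 < k -> k < m -> k * (m - k) + 1 <= 'C(m, k).
Proof.
case: k => // k _; elim: m => [|m IH] // lt.
have [e|lt'] := eqVneq k.+1 m.
  by subst m; rewrite binSn subSnn muln1 addn1.
have lt2 : k.+1 < m by rewrite ltn_neqAle lt' -ltnS lt.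
have IH' := IH lt2.
rewrite binS subSn ?(ltnW lt2) // mulnS.
have : k.+1 <= 'C(m, k).
  case: k {lt lt' IH IH'} lt2 => [|k] lt2; first by rewrite bin0.
  apply: leq_trans (ltnW lt2) _; apply: bin_ge_m => //; exact: ltnW.
set t := k.+1 * (m - k.+1); lia.
Qed.

Lemma binA2 m k : 1 < k -> k < m -> k.+1 * (m - k) <= 'C(m, k).
Proof.
case: k => // k k1; elim: m => [|m IH] // lt.
have [e|lt'] := eqVneq k.+1 m.
  by subst m; rewrite binSn subSnn muln1.
have lt2 : k.+1 < m by rewrite ltn_neqAle lt' -ltnS lt.
have IH' := IH lt2.
rewrite binS subSn ?(ltnW lt2) // mulnS.
have : k.+2 <= 'C(m, k).
  have k0 : 0 < k := k1.
  apply: leq_trans (lt2) (bin_ge_m k0 _); exact: ltn_trans (ltnSn k) lt2.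
set t := k.+2 * (m - k.+1); lia.
Qed.

Lemma card_subsets_of n j (X : {set 'I_n}) : #|X| = j.+1 ->
  #|[set Y : {set 'I_n} | Y \subset X & #|Y| == j]| = j.+1.
Proof. by move=> cX; rewrite cards_draws cX binSn. Qed.

Lemma card_supsets_of n j (Y : {set 'I_n}) : #|Y| = j -> j < n ->
  #|[set X : {set 'I_n} | Y \subset X & #|X| == j.+1]| = n - j.
Proof.
move=> cY lt.
have cC : #|~: Y| = (n - j.+1).+1.
  have := cardsC Y; rewrite card_ord cY => h; lia.
have -> : [set X : {set 'I_n} | Y \subset X & #|X| == j.+1] =
          (@setC _) @: [set Z : {set 'I_n} | Z \subset ~: Y & #|Z| == n - j.+1].
  apply/setP => X; rewrite inE; apply/andP/imsetP.
    move=> [sYX /eqP cX]; exists (~: X); last by rewrite setCK.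
    rewrite inE setCS sYX /=.
    have := cardsC X; rewrite card_ord cX => h.
    have e : #|~: X| = n - j.+1 by lia.
    by rewrite e.
  move=> [Z]; rewrite inE => /andP[sZ /eqP cZ] ->; split.
    by rewrite -setCS setCK.
  have := cardsC Z; rewrite card_ord cZ => h.
  have e : #|~: Z| = j.+1 by lia.
  by rewrite e.
by rewrite card_imset; [rewrite cards_draws cC binSn; lia | exact: (@setC_inj _)].
Qed.

Lemma local_lym n j (B C : {set {set 'I_n}}) :
  (forall X : {set 'I_n}, X \in B -> #|X| = j.+1) ->
  (forall X Y : {set 'I_n}, X \in B -> Y \subset X -> #|Y| = j -> Y \in C) ->
  (forall Y : {set 'I_n}, Y \in C -> #|Y| = j) ->
  #|B| * j.+1 <= #|C| * (n - j).
Proof.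
move=> hB hBC hC.
have [B0|[X0 X0B]] := set_0Vmem B; first by rewrite B0 cards0.
have ltj : j < n.
  have := max_card (mem X0); rewrite card_ord hB //.
pose f := fun Y X : {set 'I_n} => (Y \subset X : nat).
have L : \sum_(X in B) \sum_(Y in C) f Y X = #|B| * j.+1.
  rewrite -sum_nat_const; apply: eq_bigr => X XB.
  rewrite -big_mkcondr /= sum1_card -(card_subsets_of (hB X XB)).
  apply: eq_card => Y; rewrite !inE.
  apply/andP/andP => [[YC sYX]|[sYX /eqP cY]]; first by rewrite sYX hC.
  by split => //; apply: hBC XB sYX cY.
rewrite -L exchange_big /= -sum_nat_const; apply: leq_sum => Y YC.
rewrite -big_mkcondr /= sum1_card -(card_supsets_of (hC Y YC) ltj).
apply: subset_leq_card; apply/subsetP => X; rewrite !inE => /andP[XB sYX].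
by rewrite sYX (hB X XB) eqxx.
Qed.

Lemma divle (a b c d : nat) : 0 < b -> 0 < d -> a * d <= c * b ->
  ((a%:R / b%:R : rat) <= c%:R / d%:R)%R.
Proof.
move=> b0 d0 h.
by rewrite ler_pdivrMr ?ltr0n // mulrAC ler_pdivlMr ?ltr0n // -!natrM ler_nat.
Qed.

Lemma lym n m (A : {set {set 'I_n}}) : m <= n ->
  (forall X : {set 'I_n}, X \in A -> 0 < #|X| <= m) ->
  (forall X Y : {set 'I_n}, X \in A -> Y \in A -> X \subset Y -> X = Y) ->
  (\sum_(1 <= j < m.+1) ((#|[set X in A | #|X| == j]|)%:R / ('C(n, j))%:R) <= (1 : rat))%R.
Proof.
move=> mn hA anti.
have [->|m0] := posnP m; first by rewrite big_geq.
pose Aj j := [set X in A | #|X| == j].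
pose D j := [set Y : {set 'I_n} | (#|Y| == j) && [exists X in A, Y \subset X]].
pose Q j := (\sum_(j <= i < m.+1) ((#|Aj i|)%:R / ('C(n, i))%:R) : rat)%R.
have Cpos : forall j, j <= m -> 0 < 'C(n, j) by move=> j jm; rewrite bin_gt0 (leq_trans jm).
have AjD : forall j, Aj j \subset D j.
  move=> j; apply/subsetP => X; rewrite !inE => /andP[XA ->] /=.
  by apply/existsP; exists X; rewrite XA subxx.
have step : forall j, 0 < j -> j < m ->
    ((#|D j.+1|)%:R / ('C(n, j.+1))%:R <= (#|D j :\: Aj j|)%:R / ('C(n, j))%:R :> rat)%R.
  move=> j j0 jm.
  have ll : #|D j.+1| * j.+1 <= #|D j :\: Aj j| * (n - j).
    apply: local_lym.
    - by move=> X; rewrite inE => /andP[/eqP].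
    - move=> X Y; rewrite inE => /andP[/eqP cX /existsP[Z /andP[ZA sXZ]]] sYX cY.
      rewrite !inE cY eqxx /=; apply/andP; split; last first.
        by apply/existsP; exists Z; rewrite ZA (subset_trans sYX sXZ).
      apply/negP => /andP[YA _].
      have eYZ := anti _ _ YA ZA (subset_trans sYX sXZ).
      have := subset_leq_card sXZ; rewrite -eYZ cX cY ltnn //.
    - by move=> Y; rewrite !inE => /andP[_ /andP[/eqP]].
  apply: divle; [exact: (Cpos _ jm) | exact: (Cpos _ (ltnW jm)) |].
  have nj : 0 < n - j by rewrite subn_gt0 (leq_trans jm).
  have e : 'C(n, j) * (n - j) = j.+1 * 'C(n, j.+1) by rewrite mulnC mul_bin_left.
  rewrite -(leq_pmul2r nj) -mulnA e mulnA mulnAC.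
  by rewrite mulnAC (mulnAC #|D j :\: Aj j|); apply: leq_mul ll (leqnn _).
have cardD : forall j, #|D j| = #|Aj j| + #|D j :\: Aj j|.
  by move=> j; rewrite -(cardsID (Aj j) (D j)) (setIidPr (AjD j)).
have ind : forall t, t < m ->
    (Q (m - t)%N <= (#|D (m - t)%N|)%:R / ('C(n, (m - t)%N))%:R)%R.
  elim => [|t IH] tm.
    rewrite subn0 /Q big_ltn // big_geq // addr0.
    apply: divle; [exact: (Cpos _ (leqnn _)) | exact: (Cpos _ (leqnn _)) |].
    exact: leq_mul (subset_leq_card (AjD m)) (leqnn _).
  have tm' : t < m by apply: ltnW.
  have IH' := IH tm'.
  set j := m - t.+1.
  have ej : m - t = j.+1 by rewrite /j; lia.
  rewrite ej in IH'.
  have j0 : 0 < j by rewrite /j; lia.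
  have jm : j < m by rewrite /j; lia.
  rewrite /Q big_ltn; last by rewrite ltnS ltnW.
  apply: le_trans (lerD (lexx _) IH') _.
  apply: le_trans (lerD (lexx _) (step j j0 jm)) _.
  by rewrite cardD natrD mulrDl.
have mm : m.-1 < m by rewrite ltn_predL.
have := ind m.-1 mm.
have -> : (m - m.-1)%N = 1 by lia.
move=> h; apply: le_trans h _.
have c1 : #|D 1| <= 'C(n, 1).
  rewrite -[X in 'C(X, 1)]card_ord -card_draws; apply: subset_leq_card.
  by apply/subsetP => Y; rewrite !inE => /andP[].
have p1 : 0 < 'C(n, 1) by apply: Cpos.
by rewrite ler_pdivrMr ?ltr0n // mul1r ler_nat.
Qed.

Lemma card_bigcup_le (I T : finType) (P : pred I) (F : I -> {set T}) :
  #|\bigcup_(i | P i) F i| <= \sum_(i | P i) #|F i|.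
Proof.
elim/big_rec2: _ => [|i A s _ IH]; first by rewrite cards0.
apply: leq_trans (leq_card_setU _ _).1 _; by rewrite leq_add2l.
Qed.

Lemma card_bigcup_disj (I T : finType) (P : pred I) (F : I -> {set T}) :
  (forall i j, P i -> P j -> i != j -> [disjoint F i & F j]) ->
  \sum_(i | P i) #|F i| <= #|\bigcup_(i | P i) F i|.
Proof.
move=> dis.
pose F' := fun i => if P i then F i else set0.
have e1 : \bigcup_(i | P i) F i = \bigcup_i F' i by rewrite big_mkcond.
rewrite e1 -sum1_card partition_disjoint_bigcup; last first.
  move=> i j ne; rewrite /F'; case Pi: (P i); case Pj: (P j);
    try by rewrite disjoints_subset ?sub0set // setC0 subsetT.
  exact: dis.
rewrite big_mkcond /=; apply: leq_sum => i _; rewrite /F' sum1_card; case: (P i) => //; by rewrite cards0.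
Qed.

Definition Sp n r k (U : {set 'I_n}) : {set {set 'I_n}} :=
  if k == r.-1 then [set X : {set 'I_n} | X \subset U & #|X| == k] else Sset k U.

Definition Gk n (M : matroid n) r k : {set {set 'I_n}} :=
  if k == 0 then V_k M 0 else \bigcup_(U in Ustar_k M k) Sp r k U.

Lemma Ustar_kP n (M : matroid n) k (U : {set 'I_n}) : U \in Ustar_k M k ->
  exists F, [/\ flat M F, mrank M F = k, is_Ustar M F U & k < #|U|].
Proof. by rewrite inE => /andP[/existsP[F /and3P[fF /eqP rF hU]] kU]; exists F. Qed.

Lemma G0P n (M : matroid n) (X : {set 'I_n}) : X \in V_k M 0 ->
  exists F U, [/\ is_Ustar M F U, mrank M F = 0, X \subset U & #|X| = 1].
Proof.
case/bigcupP => U UU; rewrite inE => /andP[/andP[sXU _] /eqP cX].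
have [F [_ rF hU _]] := Ustar_kP UU.
by exists F, U.
Qed.

Lemma GkP n (M : matroid n) r k (X : {set 'I_n}) : 0 < k -> X \in Gk M r k ->
  exists F U, [/\ flat M F, is_Ustar M F U, mrank M F = k, X \subset U & #|X| = k] /\
    (k != r.-1 -> [exists x in X, exists w in U :\: X, (w < x)%N]).
Proof.
rewrite /Gk; case: eqP => [->//|_] _.
case/bigcupP => U UU; have [F [fF rF hU _]] := Ustar_kP UU.
rewrite /Sp; case: eqP => [ek|nek].
  by rewrite inE => /andP[sXU /eqP cX]; exists F, U; split => //; move/eqP.
rewrite inE => /and3P[sXU /eqP cX c]; exists F, U; split => //.
Qed.

Lemma nonempty_dep n (M : matroid n) (F U X : {set 'I_n}) :
  is_Ustar M F U -> mrank M F = 0 -> X \subset U -> 0 < #|X| -> ~~ indep M X.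
Proof.
move=> hU e0 sXU cX; apply/negP => iX.
have := mrank_ge (subset_trans sXU (ustar_sub hU)) iX; rewrite e0 leqn0 => /eqP c.
by rewrite c in cX.
Qed.

Lemma Sp_sub n r k (U X : {set 'I_n}) : X \in Sp r k U -> X \subset U /\ #|X| = k.
Proof.
rewrite /Sp; case: eqP => _; last exact: Sset_sub.
by rewrite inE => /andP[? /eqP].
Qed.

Lemma level_count n (M : matroid n) r k : 0 < k -> k < r -> 3 <= r ->
  (if k == r.-1 then k.+1 else k) * #|V_k M k| <= #|Gk M r k|.
Proof.
move=> k0 kr r3.
set w := if k == r.-1 then k.+1 else k.
have h1 : #|V_k M k| <= \sum_(U in Ustar_k M k) (#|U| - k).
  apply: leq_trans (card_bigcup_le _ _) _; apply: leq_sum => U _; exact: VofU_card.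
have h2 : \sum_(U in Ustar_k M k) #|Sp r k U| <= #|Gk M r k|.
  rewrite /Gk; case: eqP => [k00|_]; first by rewrite k00 in k0.
  apply: card_bigcup_disj => U U' UU UU' ne.
  rewrite disjoints_subset; apply/subsetP => X XS; rewrite inE; apply/negP => XS'.
  have [sXU cX] := Sp_sub XS; have [sXU' cX'] := Sp_sub XS'.
  have [F [fF rF hU _]] := Ustar_kP UU; have [F' [fF' rF' hU' _]] := Ustar_kP UU'.
  have e := same_level fF fF' hU hU' (etrans rF (esym rF')) _ sXU sXU' _.
  by move: ne; rewrite e ?eqxx // ?rF ?cX.
have h3 : forall U, U \in Ustar_k M k -> w * (#|U| - k) <= #|Sp r k U|.
  move=> U UU; have [F [fF rF hU kU]] := Ustar_kP UU.
  rewrite /w /Sp; case: eqP => [ek|nek].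
    rewrite cards_draws; apply: binA2 => //; lia.
  have := Sset_card k U; have := binA1 k0 kU; lia.
apply: leq_trans (leq_mul (leqnn w) h1) _.
rewrite big_distrr /=; apply: leq_trans _ h2; apply: leq_sum => U UU; exact: h3.
Qed.

Lemma sizeG n (M : matroid n) r k (X : {set 'I_n}) :
  X \in Gk M r k -> #|X| = if k == 0 then 1 else k.
Proof.
case: (posnP k) => [->|k0].
  by rewrite /Gk eqxx => /G0P [F [U [_ _ _ ->]]].
move/(GkP k0) => [F [U [[_ _ _ _ ->] _]]]; by case: k k0.
Qed.

Lemma antichain n (M : matroid n) r (X Y : {set 'I_n}) :
  X \in \bigcup_(k < r) Gk M r k -> Y \in \bigcup_(k < r) Gk M r k -> X \subset Y -> X = Y.
Proof.
move=> /bigcupP[a _ XG] /bigcupP[b _ YG] sXY.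
have [e|ne] := eqVneq #|X| #|Y|.
  by apply/eqP; rewrite eqEcard sXY e leqnn.
have lt : #|X| < #|Y| by rewrite ltn_neqAle ne subset_leq_card.
have cX := sizeG XG; have cY := sizeG YG.
have X1 : 0 < #|X| by rewrite cX; case: ifP => // /negbT; rewrite lt0n.
have b0 : 0 < b.
  rewrite lt0n; apply/negP => /eqP b0.
  by move: lt X1; rewrite cY b0 /=; lia.
have [F' [U' [[fF' hU' rF' sYU' cY'] _]]] := GkP b0 YG.
have sXU' : X \subset U' := subset_trans sXY sYU'.
case: (posnP a) => [a0|a0].
  move: XG; rewrite a0 /Gk eqxx => /G0P[F [U [hU rF sXU c1]]].
  have dX := nonempty_dep hU rF sXU X1.
  have iX : indep M X.
    apply: ustar_indep hU' _ sXU' _; rewrite rF' //.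
    by rewrite c1.
  by rewrite iX in dX.
have [F [U [[fF hU rF sXU cX'] cond]]] := GkP a0 XG.
have ab : a < b by rewrite -cX' -cY'.
have anr : (a : nat) != r.-1.
  apply/eqP => e; have := ltn_ord b; move: ab; rewrite e; lia.
move: (cond anr) => /existsP[x /andP[xX /existsP[w /andP[/setDP[wU wX] wx]]]].
have a0' : 0 < mrank M F by rewrite rF.
have ab' : mrank M F < mrank M F' by rewrite rF rF'.
have cX'' : #|X| = mrank M F by rewrite rF.
by case: (cross hU a0' hU' ab' sXU cX'' sXU' xX wU wX wx).
Qed.

Unset Implicit Arguments.

Theorem lemma5p10 (n r : nat) (M : matroid n) :
  3 <= r -> 2 * r <= n -> mrank M setT = r ->
  (\sum_(k < r) (#|V_k M k|)%:R * ck n r k <= (1 : rat))%R.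
Proof.
move=> r3 _ rT.
have rn : r <= n by rewrite -rT; have := mrank_card M setT; rewrite cardsT card_ord.
pose A := \bigcup_(k < r) Gk M r k.
pose Aj j := [set X in A | #|X| == j].
have GA : forall k, k < r -> Gk M r k \subset A.
  move=> k kr; apply/subsetP => X XG; apply/bigcupP; exists (Ordinal kr) => //.
have hA : forall X : {set 'I_n}, X \in A -> 0 < #|X| <= r.-1.
  move=> X /bigcupP[k _ XG]; rewrite (sizeG XG).
  have := ltn_ord k; case: ifP => [_|/negbT nz]; first lia.
  by rewrite -lt0n in nz; lia.
have LYM := lym (leq_trans (leq_pred r) rn) hA (@antichain n M r).
rewrite prednK ?(leq_trans _ r3) // in LYM.
apply: le_trans LYM.
have r2 : 1 < r.-1 by rewrite -ltnS prednK ?(leq_trans _ r3).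
have Cpos : forall j, j <= n -> (0 < 'C(n, j)) by move=> j jn; rewrite bin_gt0.
rewrite -(big_mkord xpredT (fun k => ((#|V_k M k|)%:R * ck n r k)%R)).
rewrite big_ltn ?(leq_trans _ r3) // big_ltn ?(leq_trans _ r3) //.
rewrite [X in (_ <= X)%R]big_ltn ?(leq_trans _ r3) // addrA.
apply: lerD.
  have c0 : ck n r 0 = (1 / n%:R)%R.
    by rewrite /ck; case: eqP => [e|//]; rewrite -e in r2.
  have c1 : ck n r 1 = (1 / n%:R)%R.
    rewrite /ck; case: eqP => [e|_]; first by rewrite -e in r2.
    by rewrite /= bin1.
  rewrite c0 c1 !mul1r -mulrDl -natrD bin1.
  apply: divle; [lia | lia |]; rewrite leq_mul2r; apply/orP; right.
  have d01 : [disjoint Gk M r 0 & Gk M r 1].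
    rewrite disjoints_subset; apply/subsetP => X XG0; rewrite inE; apply/negP => XG1.
    move: XG0; rewrite /Gk eqxx => /G0P[F [U [hU rF sXU c1']]].
    have [F1 [U1 [[_ hU1 rF1 sXU1 cX1] _]]] := GkP (isT : 0 < 1) XG1.
    have X1 : 0 < #|X| by rewrite c1'.
    have dX := nonempty_dep hU rF sXU X1.
    have iX : indep M X by apply: (ustar_indep hU1); rewrite ?rF1 ?cX1.
    by rewrite iX in dX.
  have lc1 := level_count M (isT : 0 < 1) (leq_trans _ r3) r3.
  have n1 : (1 == r.-1) = false.
    by apply/negbTE/eqP => e; rewrite -e in r2.
  rewrite n1 mul1n in lc1.
  have e0 : V_k M 0 = Gk M r 0 by rewrite /Gk eqxx.
  have sub : Gk M r 0 :|: Gk M r 1 \subset Aj 1.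
    apply/subsetP => X; rewrite in_setU => /orP[] XG; rewrite inE.
      by rewrite (subsetP (GA 0 _)) ?(sizeG XG) //; lia.
    by rewrite (subsetP (GA 1 _)) ?(sizeG XG) //; lia.
  apply: leq_trans (subset_leq_card sub).
  rewrite cardsU (disjoint_setI0 d01) cards0 subn0 e0 leq_add2l.
  exact: lc1.
apply: ler_sum_nat => k /andP[k2 kr].
have k0 : 0 < k by lia.
have lc := level_count M k0 kr r3.
have ck_eq : ck n r k = ((if k == r.-1 then k.+1 else k)%:R / ('C(n, k))%:R)%R.
  rewrite /ck; case: eqP => [e|ne].
    by rewrite e prednK // (leq_trans _ r3).
  have -> : (k == 0) = false by apply/negbTE; lia.
  by [].
rewrite ck_eq; move: lc; set w := (if k == r.-1 then k.+1 else k) => lc.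
rewrite mulrA -natrM.
have kn : k <= n by apply: leq_trans (ltnW kr) rn.
apply: divle; [exact: Cpos | exact: Cpos |]; apply: leq_mul (leqnn _).
rewrite mulnC; apply: leq_trans lc _; apply: subset_leq_card.
apply/subsetP => X XG; rewrite inE (subsetP (GA k kr)) // (sizeG XG).
by case: ifP => [/eqP k00|_]; [rewrite k00 in k0 | rewrite eqxx].
Qed.
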